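(* For every integer $n\geq 9$, $$\dot{\imath}_{[1,2]}(P_9\Box P_n)=\begin{cases}\left\lfloor \frac{21n+28}{10}\right\rfloor & \text{if } n\equiv 0,7 \text{ or } 9 \pmod{10},\\[2pt] \left\lfloor \frac{21n+18}{10}\right\rfloor & \text{otherwise.}\end{cases}$$
   Context: $P_k$ denotes the path on $k$ vertices and $P_m\Box P_n$ the Cartesian product of two paths (the $m\times n$ grid graph). A set $S$ of vertices of a graph $G$ is independent if no two vertices of $S$ are adjacent, and dominating if every vertex not in $S$ has at least one neighbor in $S$. An independent $[1,2]$-set of $G$ is an independent dominating set $S$ such that every vertex $v\in V(G)\setminus S$ has at least one and at most two neighbors in $S$. When $G$ has an independent $[1,2]$-set, $\dot{\imath}_{[1,2]}(G)$ denotes the minimum cardinality of an independent $[1,2]$-set of $G$ (the statement includes the existence of such a set). *)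

(* Defs.v *)
From mathcomp Require Import all_boot.
Set Implicit Arguments. Unset Strict Implicit. Unset Printing Implicit Defensive.

Definition path_adj (k : nat) (i j : 'I_k) : bool :=
  (i.+1 == j :> nat) || (j.+1 == i :> nat).

Definition grid_adj (m n : nat) (u v : 'I_m * 'I_n) : bool :=
  ((u.1 == v.1) && path_adj u.2 v.2) || ((u.2 == v.2) && path_adj u.1 v.1).

Definition nbhd (T : finType) (adj : rel T) (v : T) : {set T} :=
  [set u | adj v u].

Definition independent (T : finType) (adj : rel T) (S : {set T}) : bool :=
  [forall u in S, forall v in S, ~~ adj u v].

Definition indep12 (T : finType) (adj : rel T) (S : {set T}) : bool :=
  independent adj S &&
  [forall v in ~: S, (1 <= #|nbhd adj v :&: S| <= 2)].

Definition i12_eq (T : finType) (adj : rel T) (k : nat) : Prop :=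
  (exists S : {set T}, indep12 adj S /\ #|S| = k) /\
  (forall S : {set T}, indep12 adj S -> k <= #|S|).

(* Main.v *)
Require Import Defs.
From mathcomp Require Import all_boot.
From Stdlib Require Import Lia.
Set Implicit Arguments. Unset Strict Implicit. Unset Printing Implicit Defensive.

Definition col := seq bool.
Fixpoint colind (c : col) : bool :=
  match c with x :: ((y :: _) as t) => ~~ (x && y) && colind t | _ => true end.
Fixpoint allb k : seq col :=
  if k is k'.+1 then [seq b :: s | b <- [:: false; true], s <- allb k'] else [:: [::]].
Definition cols : seq col := filter colind (allb 9).
Definition z : col := nseq 9 false.
Fixpoint disj (b c : col) : bool :=
  match b, c with x :: b', y :: c' => ~~ (x && y) && disj b' c' | _, _ => true end.
Fixpoint okr (pb : bool) (a b c : col) : bool :=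
  match a, b, c with
  | x :: a', y :: b', u :: c' =>
     (y || (0 < x + u + pb + (if b' is y' :: _ then y' else false) <= 2)) && okr y a' b' c'
  | _, _, _ => true end.
Definition okc a b c := okr false a b c.
Definition pc (c : col) := count id c.
Definition minopt (x y : option nat) :=
  match x, y with Some a, Some b => Some (minn a b) | Some a, None => Some a | None, _ => y end.
Definition mino (l : seq (option nat)) := foldr minopt None l.
Definition entry (b : col) (row : seq (option nat)) (c : col) : option nat :=
  if disj b c then
    mino (map (fun p => if p.2 is Some v then (if okc p.1 b c then Some (v + pc c) else None) else None)
      (zip cols row))
  else None.
Definition step (D : seq (seq (option nat))) :=
  map (fun c => map (fun p => entry p.1 p.2 c) (zip cols D)) cols.
Definition D1 : seq (seq (option nat)) :=
  map (fun c => map (fun b => if b == z then Some (pc c) else None) cols) cols.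
Definition ans (D : seq (seq (option nat))) : option nat :=
  mino (flatten (map (fun q => map (fun p => if okc p.1 q.1 z then p.2 else None) (zip cols q.2))
     (zip cols D))).
Fixpoint traj D k := if k is k'.+1 then D :: traj (step D) k' else [::].
Definition shiftD k (D : seq (seq (option nat))) := map (map (omap (addn k))) D.
Definition fval n := if (n %% 10 == 0) || (n %% 10 == 7) || (n %% 10 == 9)
     then (21 * n + 28) %/ 10 else (21 * n + 18) %/ 10.
Definition L := traj D1 28.
Definition bigcheck := all (fun n => ans (nth [::] L n.-1) == Some (fval n)) (iota 9 19)
   && (nth [::] L 27 == shiftD 21 (nth [::] L 17)).
Lemma bc : bigcheck. Proof. vm_compute. reflexivity. Qed.

Definition Dn n := iter n.-1 step D1.
Definition lookup (D : seq (seq (option nat))) c b := nth None (nth [::] D (index c cols)) (index b cols).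

Lemma minoM1 l v : Some v \in l -> exists m, mino l = Some m /\ m <= v.
Proof.
elim: l => //= x l IH; rewrite inE => /orP[/eqP<-|/IH[m [-> le]]].
  case: (mino l) => [a|] /=; [exists (minn v a); split=>//; apply: geq_minl | by exists v].
case: x => [a|] /=; last by exists m.
by exists (minn a m); split => //; rewrite geq_min le orbT.
Qed.
Lemma minoM2 l m : mino l = Some m -> Some m \in l.
Proof.
elim: l m => //= x l IH m; case: x => [a|] /=; last by move/IH => H; rewrite inE H orbT.
case E: (mino l) => [b|] /=; last by case=> <-; rewrite mem_head.
case=> <-; rewrite /minn; case: ltnP => _; first by rewrite mem_head.
by rewrite inE (IH _ E) orbT.
Qed.
Lemma minoM3 k l : mino (map (omap (addn k)) l) = omap (addn k) (mino l).
Proof.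
elim: l => //= x l ->; case: x => [a|]; case: (mino l) => [b|] //=.
by rewrite addn_minr.
Qed.

Lemma uniq_cols : uniq cols. Proof. by vm_compute. Qed.
Lemma z_cols : z \in cols. Proof. by vm_compute. Qed.

Section Z.
Variables (T : eqType) (d : T).
Lemma Z1 a x (l : seq T) : (a, x) \in zip cols l -> a \in cols /\ nth d l (index a cols) = x.
Proof.
move/nthP => /(_ (a, x)) [i lt]; rewrite nth_zip_cond lt => -[ea ex].
move: lt; rewrite size_zip leq_min => /andP[l1 l2].
rewrite -ea index_uniq ?uniq_cols //; split; first exact: mem_nth.
by rewrite (set_nth_default x).
Qed.
Lemma Z2 a (l : seq T) : a \in cols -> index a cols < size l -> (a, nth d l (index a cols)) \in zip cols l.
Proof.
move=> ac il; apply/(nthP (a, d)); exists (index a cols); first by rewrite size_zip leq_min il index_mem ac.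
rewrite nth_zip_cond size_zip leq_min il index_mem ac /= nth_index //.
Qed.
End Z.

Lemma size_step D : size (step D) = size cols. Proof. by rewrite size_map. Qed.
Lemma size_Dn n : size (Dn n) = size cols.
Proof. rewrite /Dn; case: n.-1 => [|k]; [by rewrite /D1 size_map | by rewrite iterS size_step]. Qed.

Lemma lookup_step D c b : size D = size cols -> c \in cols -> b \in cols ->
  lookup (step D) c b = entry b (nth [::] D (index b cols)) c.
Proof.
move=> sD cc bc; rewrite /lookup /step (nth_map [::]) ?index_mem // nth_index //.
rewrite (nth_map ([::], [::])) ?size_zip ?sD ?minnn ?index_mem //.
by rewrite nth_zip // nth_index.
Qed.

Lemma lookup_D1 c b : c \in cols -> b \in cols ->
  lookup D1 c b = if b == z then Some (pc c) else None.
Proof.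
move=> cc bc; rewrite /lookup /D1 (nth_map [::]) ?index_mem // nth_index //.
by rewrite (nth_map [::]) ?index_mem // nth_index.
Qed.

Lemma entry_lower b row c a v : disj b c -> a \in cols -> okc a b c ->
  nth None row (index a cols) = Some v -> exists m, entry b row c = Some m /\ m <= v + pc c.
Proof.
move=> dbc ac ok nv; rewrite /entry dbc; apply: minoM1.
have il : index a cols < size row by rewrite ltnNge; apply/negP => H; rewrite nth_default in nv.
apply/mapP; exists (a, Some v); last by rewrite /= ok.
by rewrite -nv; apply: Z2.
Qed.

Lemma entry_upper b row c m : entry b row c = Some m ->
  disj b c /\ exists a v, [/\ a \in cols, okc a b c, nth None row (index a cols) = Some v & m = v + pc c].
Proof.
rewrite /entry; case: ifP => // dbc /minoM2 /mapP [[a [v|]] ina] //=.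
case: ifP => // ok [->]; split=> //; exists a, v; case: (Z1 None ina) => ac nv; by [].
Qed.

Lemma ans_lower D c b v : c \in cols -> b \in cols -> okc b c z -> size D = size cols ->
  lookup D c b = Some v -> exists m, ans D = Some m /\ m <= v.
Proof.
move=> cc bc ok sD lv; apply: minoM1; apply/flatten_mapP.
exists (c, nth [::] D (index c cols)); first by apply: Z2; rewrite // sD index_mem.
apply/mapP; exists (b, Some v); last by rewrite /= ok.
rewrite -lv; apply: Z2 => //; rewrite ltnNge; apply/negP => H; move: lv; rewrite /lookup nth_default //.
Qed.

Lemma ans_upper D m : ans D = Some m -> exists c b, [/\ c \in cols, b \in cols, okc b c z & lookup D c b = Some m].
Proof.
move/minoM2/flatten_mapP => [[c row] inc /mapP [[b x] inb /=]].
case: ifP => // ok ex; case: (Z1 [::] inc) => cc rD; case: (Z1 None inb) => bc rb.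
by exists c, b; split => //; rewrite /lookup rD rb.
Qed.

Definition Wn (w : seq col) j := nth z w j.
Definition Wp (w : seq col) j := if j is j'.+1 then Wn w j' else z.
Definition condj w j := disj (Wn w j) (Wn w j.+1) && okc (Wp w j) (Wn w j) (Wn w j.+1).
Definition cost (w : seq col) := sumn (map pc w).
Definition validw w := all (fun c => c \in cols) w && all (condj w) (iota 0 (size w)).

Lemma Dn_S n : Dn n.+2 = step (Dn n.+1). Proof. by []. Qed.

Lemma Wn_cols w j : all (fun c => c \in cols) w -> j < size w -> Wn w j \in cols.
Proof. by move=> /allP H jw; apply: H; apply: mem_nth. Qed.
Lemma Wp_cols w j : all (fun c => c \in cols) w -> j <= size w -> Wp w j \in cols.
Proof. case: j => [|j] /=; [by move=> _ _; apply: z_cols | by apply: Wn_cols]. Qed.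

Lemma cost_take w k : k < size w -> cost (take k.+1 w) = cost (take k w) + pc (Wn w k).
Proof. by move=> kw; rewrite /cost (take_nth z) // map_rcons sumn_rcons. Qed.

Lemma dp_lower w : all (fun c => c \in cols) w -> (forall j, j.+1 < size w -> condj w j) ->
  forall k, k < size w -> exists v, lookup (Dn k.+1) (Wn w k) (Wp w k) = Some v /\ v <= cost (take k.+1 w).
Proof.
move=> ac cj; elim=> [|k IH] kw.
  have -> : Dn 1 = D1 by [].
  exists (pc (Wn w 0)); rewrite lookup_D1 ?eqxx ?z_cols //; last exact: Wn_cols ac kw.
  split => //.
  by rewrite cost_take // take0.
have [v [lv le]] := IH (ltnW kw).
rewrite Dn_S lookup_step ?size_Dn ?Wn_cols // ?(ltnW kw) //.
have /andP[d o] := cj k kw.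
have [m [-> lm]] := entry_lower d (Wp_cols ac (ltnW (ltnW kw))) o lv.
exists m; split => //; rewrite cost_take //; apply: (leq_trans lm); by rewrite leq_add2r.
Qed.

Lemma nth_rcons_lt (w : seq col) c i : i < size w -> Wn (rcons w c) i = Wn w i.
Proof. by move=> H; rewrite /Wn nth_rcons H. Qed.

Lemma dp_upper k : forall c b v, c \in cols -> b \in cols -> lookup (Dn k.+1) c b = Some v ->
  exists w, [/\ size w = k.+1, all (fun c => c \in cols) w, Wn w k = c, Wp w k = b &
     cost w = v /\ forall j, j < k -> condj w j].
Proof.
elim: k => [|k IH] c b v cc bc.
  have -> : Dn 1 = D1 by [].
  rewrite lookup_D1 //; case: eqP => // -> [<-].
  by exists [:: c]; split => //=; [rewrite cc | rewrite /cost /= addn0].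
rewrite Dn_S lookup_step ?size_Dn // => /entry_upper [d [a [v' [ac o nv ->]]]].
have [w [sw aw wk wpk [cw cj]]] := IH b a v' bc ac nv.
exists (rcons w c); split.
- by rewrite size_rcons sw.
- by rewrite all_rcons cc aw.
- by rewrite /Wn nth_rcons sw ltnn eqxx.
- by rewrite /= nth_rcons_lt ?sw.
split; first by rewrite /cost map_rcons sumn_rcons -/(cost w) cw.
move=> j jk.
have Hp : forall i, i <= k -> Wp (rcons w c) i = Wp w i.
  by case=> [|i] //= ik; rewrite nth_rcons_lt // sw; apply: (leq_trans ik).
rewrite ltnS leq_eqVlt in jk; case/orP: jk => [/eqP->|jk].
  rewrite /condj Hp // wpk nth_rcons_lt ?sw // wk.
  by rewrite /Wn nth_rcons sw ltnn eqxx d o.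
rewrite /condj Hp ?(ltnW jk) // !nth_rcons_lt ?sw ?(ltnW jk) //; last by apply: (leq_trans jk).
by apply: cj.
Qed.

Lemma disj_nseq c k : disj c (nseq k false).
Proof. by elim: c k => [|x c IH] [|k] //=; rewrite andbF IH. Qed.

Lemma final_lower w n : size w = n.+1 -> validw w -> exists m, ans (Dn n.+1) = Some m /\ m <= cost w.
Proof.
move=> sw /andP[aw /allP cj].
have nw : n < size w by rewrite sw.
have nw' : n <= size w by rewrite sw.
have cj' : forall j, j.+1 < size w -> condj w j by move=> j jw; apply: cj; rewrite mem_iota add0n (ltnW jw).
have [v [lv le]] := @dp_lower w aw cj' n nw.
have /andP[_ o] : condj w n by apply: cj; rewrite mem_iota add0n sw ltnSn.
rewrite /Wn [nth z w n.+1]nth_default ?sw // -/(Wn w n) in o.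
have [m [am lm]] := ans_lower (Wn_cols aw nw) (Wp_cols aw nw') o (size_Dn _) lv.
exists m; split => //; apply: (leq_trans lm); by rewrite -sw take_size in le.
Qed.

Lemma final_upper n m : ans (Dn n.+1) = Some m -> exists w, [/\ size w = n.+1, validw w & cost w = m].
Proof.
move=> /ans_upper [c [b [cc bc o lv]]].
have [w [sw aw wk wpk [cw cj]]] := dp_upper cc bc lv.
exists w; split => //; rewrite /validw aw /=; apply/allP => j; rewrite mem_iota leq0n /= sw add0n ltnS leq_eqVlt.
case/orP => [/eqP->|]; last exact: cj.
by rewrite /condj wk wpk /Wn [nth z w n.+1]nth_default ?sw // disj_nseq o.
Qed.

Lemma zip_mapr (A B C : Type) (s : seq A) (t : seq B) (f : B -> C) :
  zip s (map f t) = map (fun p => (p.1, f p.2)) (zip s t).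
Proof. by elim: s t => [|x s IH] [|y t] //=; rewrite IH. Qed.

Lemma entry_shift k b row c : entry b (map (omap (addn k)) row) c = omap (addn k) (entry b row c).
Proof.
rewrite /entry; case: ifP => // _; rewrite zip_mapr -map_comp -minoM3 -map_comp.
congr mino; apply: eq_map => [[a [x|]]] //=; case: ifP => //= _; by rewrite addnA.
Qed.

Lemma step_shift k D : step (shiftD k D) = shiftD k (step D).
Proof.
rewrite /step /shiftD -map_comp; apply: eq_map => c /=.
rewrite zip_mapr -!map_comp; apply: eq_map => p /=; exact: entry_shift.
Qed.

Lemma ans_shift k D : ans (shiftD k D) = omap (addn k) (ans D).
Proof.
rewrite /ans /shiftD zip_mapr -map_comp -minoM3 map_flatten -map_comp; congr (mino (flatten _)).
apply: eq_map => q /=; rewrite zip_mapr -!map_comp; apply: eq_map => p /=; by case: ifP.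
Qed.

Lemma nth_traj D k i : i < k -> nth [::] (traj D k) i = iter i step D.
Proof.
elim: k D i => [|k IH] D [|i] //= ik; by rewrite IH // -iterSr.
Qed.

Lemma bc_parts : (forall n, 9 <= n <= 27 -> ans (Dn n) = Some (fval n)) /\ Dn 28 = shiftD 21 (Dn 18).
Proof.
have := bc; rewrite /bigcheck => /andP [/allP H /eqP E]; split.
  move=> n /andP[n9 n27].
  have Hn : n \in iota 9 19 by rewrite mem_iota n9 /=; exact: leq_ltn_trans n27 _.
  have n28 : n.-1 < 28 by apply: leq_ltn_trans (leq_pred n) _; apply: leq_ltn_trans n27 _.
  have e : nth [::] L n.-1 = Dn n := @nth_traj D1 28 n.-1 n28.
  move/eqP: (H n Hn); rewrite e; move=> E'; exact: E'.
have e27 : nth [::] L 27 = Dn 28 := @nth_traj D1 28 27 isT.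
have e17 : nth [::] L 17 = Dn 18 := @nth_traj D1 28 17 isT.
move: E; rewrite e27 e17; move=> E'; exact: E'.
Qed.

Lemma DnS m : 0 < m -> Dn m.+1 = step (Dn m).
Proof. by case: m. Qed.

Lemma periodic k : Dn (k + 28) = shiftD 21 (Dn (k + 18)).
Proof.
elim: k => [|k IH]; first by move: bc_parts => [_ E]; exact: E.
have p1 : 0 < k + 28 by rewrite addnC.
have p2 : 0 < k + 18 by rewrite addnC.
rewrite !addSn (DnS p1) (DnS p2) IH; exact: step_shift.
Qed.

Lemma divE n c : (21 * (n + 10) + c) %/ 10 = (21 * n + c) %/ 10 + 21.
Proof. by rewrite mulnDr addnAC addnC divnMDl // addnC. Qed.

Lemma fval10 n : fval (n + 10) = fval n + 21.
Proof. rewrite /fval modnDr !divE; by case: (_ || _ || _). Qed.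

Lemma ans_all n : 9 <= n -> ans (Dn n) = Some (fval n).
Proof.
elim/ltn_ind: n => n IH n9.
case: (leqP n 27) => h; first by case: bc_parts => H _; apply: H; rewrite n9.
have [k ek] : exists k, n = k + 28 by exists (n - 28); rewrite subnK.
rewrite ek in IH *; rewrite periodic ans_shift IH.
- have -> : k + 28 = k + 18 + 10 by rewrite -addnA.
  by rewrite fval10 /= [_ + 21]addnC.
- by rewrite ltn_add2l.
- by rewrite addnC.
Qed.

Lemma mem_allb k s : (s \in allb k) = (size s == k).
Proof.
elim: k s => [|k IH] s; first by case: s.
have -> : allb k.+1 = [seq b :: s | b <- [:: false; true], s <- allb k] by [].
case: s => [|b s].
  by apply/allpairsP => -[[x y] [_ _ /=]].
apply/allpairsP/idP => [[[x y] [_ /= ys [_ ->]]]|H]; first by rewrite /= eqSS -IH.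
by exists (b, s); split => //=; [case: b {H} | rewrite IH].
Qed.

Lemma mem_cols c : (c \in cols) = (size c == 9) && colind c.
Proof. by rewrite /cols mem_filter mem_allb andbC. Qed.

Lemma all_iota_succ (P : pred nat) k : all P (iota 1 k) = all (fun i => P i.+1) (iota 0 k).
Proof. by rewrite -(addn0 1) iotaDl all_map. Qed.

Lemma colind_spec s : colind s = all (fun i => ~~ (nth false s i && nth false s i.+1)) (iota 0 (size s)).
Proof.
elim: s => [|x t IH] //=; rewrite all_iota_succ -IH /=.
by case: t {IH} => [|y t] //=; rewrite andbF.
Qed.

Lemma disj_spec s t : disj s t = all (fun i => ~~ (nth false s i && nth false t i)) (iota 0 (size s)).
Proof.
elim: s t => [|x s IH] [|y t] //=.
  rewrite andbF /=; apply/esym/allP => i _; by rewrite nth_nil andbF.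
by rewrite all_iota_succ -IH.
Qed.

Lemma okr_spec pb a b c : size a = size b -> size c = size b ->
  okr pb a b c = all (fun i => nth false b i || (0 < nth false a i + nth false c i +
     (if i is i'.+1 then nth false b i' else pb) + nth false b i.+1 <= 2)) (iota 0 (size b)).
Proof.
elim: b a c pb => [|y b IH] [|x a] [|u c] pb //= [sa] [sc].
rewrite all_iota_succ (IH a c y sa sc) /=.
congr (_ && _); first by case: b {IH sa sc}.
apply: eq_all => i /=; by case: i.
Qed.

Lemma all_iotaP (P : pred nat) k : reflect (forall i, i < k -> P i) (all P (iota 0 k)).
Proof.
apply: (iffP allP) => H i; first by move=> ik; apply: H; rewrite mem_iota add0n ik.
by rewrite mem_iota add0n => /andP[_ ik]; apply: H.
Qed.

Section Link.
Variable n : nat.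
Implicit Type S : {set 'I_9 * 'I_n}.

Definition gn S i j := [exists u in S, (nat_of_ord u.1 == i) && (nat_of_ord u.2 == j)].

Lemma gn_ord S (x : 'I_9) (y : 'I_n) : gn S x y = ((x, y) \in S).
Proof.
apply/existsP/idP => [[[a b] /andP[H /andP[/eqP ea /eqP eb]]] | H].
  by move/ord_inj: ea => ea; move/ord_inj: eb => eb; rewrite -ea -eb.
by exists (x, y); rewrite H !eqxx.
Qed.

Lemma gnP S i j : gn S i j -> exists x y, [/\ nat_of_ord x = i, nat_of_ord y = j & (x, y) \in S].
Proof. by move/existsP => [[a b] /andP[H /andP[/eqP ea /eqP eb]]]; exists a, b. Qed.

Lemma gn_out S i j : (9 <= i) || (n <= j) -> gn S i j = false.
Proof.
move=> h; apply/negbTE/negP => H; have [x [y [ex ey _]]] := gnP H; move: h.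
by rewrite -ex -ey (leqNgt 9) (leqNgt n) !ltn_ord.
Qed.

Definition colS S j := mkseq (fun i => gn S i j) 9.
Arguments colS : simpl never.
Definition wS S := mkseq (colS S) n.

Lemma nth_colS S i j : nth false (colS S j) i = gn S i j.
Proof.
case: (ltnP i 9) => h; first by rewrite nth_mkseq.
by rewrite nth_default ?size_mkseq // gn_out ?h.
Qed.

Lemma nth_z i : nth false z i = false.
Proof. by rewrite /z nth_nseq if_same. Qed.

Lemma Wn_wS S j : Wn (wS S) j = colS S j.
Proof.
case: (ltnP j n) => h; first by rewrite /Wn nth_mkseq.
rewrite /Wn nth_default ?size_mkseq //.
apply: (@eq_from_nth _ false); rewrite ?size_mkseq // => i _.
by rewrite nth_colS gn_out ?h ?orbT // nth_z.
Qed.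

Lemma Wp_wS S j : Wp (wS S) j = (if j is j'.+1 then colS S j' else z).
Proof. by case: j => [|j] //=; rewrite Wn_wS. Qed.

Definition nb S i j := (if j is j'.+1 then gn S i j' else false) + gn S i j.+1 +
   (if i is i'.+1 then gn S i' j else false) + gn S i.+1 j.

Definition cond3 S i j := [&& ~~ (gn S i j && gn S i.+1 j), ~~ (gn S i j && gn S i j.+1) &
   gn S i j || (0 < nb S i j <= 2)].

Lemma valid_iff S : validw (wS S) <-> (forall i j, i < 9 -> j < n -> cond3 S i j).
Proof.
have E : forall j, (colS S j \in cols) && condj (wS S) j =
   all (fun i => cond3 S i j) (iota 0 9).
  move=> j; rewrite /condj !Wn_wS Wp_wS mem_cols size_mkseq eqxx colind_spec disj_spec /okc okr_spec;
    rewrite ?size_mkseq //; last by case: j.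
  rewrite -!all_predI; apply: eq_all => i. Opaque colS. rewrite /= !nth_colS. Transparent colS.
  rewrite /cond3 /nb; case: j => [|j]; case: i => [|i]; cbv iota beta; by rewrite ?nth_z ?nth_colS.
have sz : size (wS S) = n by rewrite size_mkseq.
rewrite /validw sz {1}/wS all_map; split.
  move=> /andP[/all_iotaP A1 /all_iotaP A2] i j i9 jn.
  have a1 : colS S j \in cols := A1 j jn.
  have a2 : condj (wS S) j := A2 j jn.
  by have := E j; rewrite a1 a2 => /esym /all_iotaP; apply.
move=> H.
have Ej : forall j, j < n -> (colS S j \in cols) && condj (wS S) j.
  by move=> j jn; rewrite E; apply/all_iotaP => i i9; apply: H.
apply/andP; split; apply/all_iotaP => j jn; by case/andP: (Ej j jn).
Qed.
Lemma cardA (T : finType) (A : {set T}) : #|A| = \sum_(u : T) (u \in A : nat).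
Proof. rewrite -sum1_card big_mkcond /=; apply: eq_bigr => u _; by case: (u \in A). Qed.

Lemma sum_pt S a b :
  \sum_(u : 'I_9 * 'I_n) ((nat_of_ord u.1 == a) && (nat_of_ord u.2 == b) && (u \in S) : nat) = gn S a b.
Proof.
case E: (gn S a b).
  have [x [y [ex ey H]]] := gnP E.
  rewrite (bigD1 (x, y)) //= ex ey H !eqxx /= big1 // => -[u v] /=; rewrite xpair_eqE negb_and => neq.
  case: eqP => eu; case: eqP => ev //=.
  rewrite -ex in eu; rewrite -ey in ev; move/ord_inj: eu => eu; move/ord_inj: ev => ev.
  by rewrite eu ev !eqxx in neq.
apply: big1 => -[u v] _ /=.
case H: ((nat_of_ord u == a) && _ && _) => //.
have : gn S a b by apply/existsP; exists (u, v); case/andP: H => /andP[-> ->] ->.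
by rewrite E.
Qed.

Lemma S1 S p q : \sum_(u : 'I_9 * 'I_n) ((p == u.1 :> nat) && ((nat_of_ord u.2).+1 == q) && (u \in S) : nat)
  = (if q is q'.+1 then gn S p q' else false).
Proof.
case: q => [|q]; first by apply: big1 => u _; rewrite andbF.
rewrite -sum_pt; apply: eq_bigr => u _; by rewrite eqSS (eq_sym p).
Qed.
Lemma S2 S p q : \sum_(u : 'I_9 * 'I_n) ((p == u.1 :> nat) && (q.+1 == u.2 :> nat) && (u \in S) : nat)
  = gn S p q.+1.
Proof. rewrite -sum_pt; apply: eq_bigr => u _; by rewrite (eq_sym p) (eq_sym q.+1). Qed.
Lemma S3 S p q : \sum_(u : 'I_9 * 'I_n) ((q == u.2 :> nat) && ((nat_of_ord u.1).+1 == p) && (u \in S) : nat)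
  = (if p is p'.+1 then gn S p' q else false).
Proof.
case: p => [|p]; first by apply: big1 => u _; rewrite andbF.
rewrite -sum_pt; apply: eq_bigr => u _; by rewrite eqSS (eq_sym q) [(_ == q) && _]andbC.
Qed.
Lemma S4 S p q : \sum_(u : 'I_9 * 'I_n) ((q == u.2 :> nat) && (p.+1 == u.1 :> nat) && (u \in S) : nat)
  = gn S p.+1 q.
Proof. rewrite -sum_pt; apply: eq_bigr => u _; by rewrite (eq_sym q) (eq_sym p.+1) [(_ == q) && _]andbC. Qed.

Lemma bool6 (A B C D E F s : bool) : ~~ (A && E) -> ~~ (A && F) -> ~~ (D && B) -> ~~ (D && C) ->
  ~~ (B && C) -> ~~ (E && F) ->
  (((A && (B || C)) || (D && (E || F))) && s : nat) = (A && C && s) + (A && B && s) + (D && F && s) + (D && E && s).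
Proof. by case: A; case: B; case: C; case: D; case: E; case: F; case: s. Qed.

Lemma card_nb S (x : 'I_9) (y : 'I_n) : #|nbhd (@grid_adj 9 n) (x, y) :&: S| = nb S x y.
Proof.
rewrite cardA /nb -S1 -S2 -S3 -S4 -!big_split /=; apply: eq_bigr => -[a b] _.
rewrite !inE /grid_adj /path_adj /= -!val_eqE /=.
apply: bool6; apply/negP => /andP[/eqP h1 /eqP h2]; lia.
Qed.
Lemma ind_iff S : independent (@grid_adj 9 n) S <->
  (forall i j, i < 9 -> j < n -> ~~ (gn S i j && gn S i.+1 j) && ~~ (gn S i j && gn S i j.+1)).
Proof.
split.
  move/forall_inP => H i j i9 jn; apply/andP; split; apply/negP => /andP[h1 h2].
    have [x [y [ex ey hx]]] := gnP h1; have [x' [y' [ex' ey' hx']]] := gnP h2.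
    have /forall_inP H' := H _ hx; have := H' _ hx'.
    by rewrite /grid_adj /path_adj /= -!val_eqE /= ex ey ex' ey' !eqxx /= orbT.
  have [x [y [ex ey hx]]] := gnP h1; have [x' [y' [ex' ey' hx']]] := gnP h2.
  have /forall_inP H' := H _ hx; have := H' _ hx'.
  by rewrite /grid_adj /path_adj /= -!val_eqE /= ex ey ex' ey' !eqxx.
move=> H; apply/forall_inP => -[x y] hu; apply/forall_inP => -[x' y'] hv.
rewrite /grid_adj /path_adj /= -!val_eqE /=; apply/negP.
case/orP => /andP[/eqP e /orP[/eqP e2|/eqP e2]].
- have /andP[_] := H x y (ltn_ord x) (ltn_ord y).
  by rewrite (gn_ord S x y) hu e2 e (gn_ord S x' y') hv.
- have /andP[_] := H x y' (ltn_ord x) (ltn_ord y').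
  by rewrite e2 (gn_ord S x y) hu e (gn_ord S x' y') hv.
- have /andP[+ _] := H x y (ltn_ord x) (ltn_ord y).
  by rewrite (gn_ord S x y) hu e2 e (gn_ord S x' y') hv.
- have /andP[+ _] := H x' y (ltn_ord x') (ltn_ord y).
  by rewrite e2 (gn_ord S x y) hu e (gn_ord S x' y') hv.
Qed.

Lemma dom_iff S : [forall v in ~: S, 1 <= #|nbhd (@grid_adj 9 n) v :&: S| <= 2] <->
  (forall i j, i < 9 -> j < n -> gn S i j || (0 < nb S i j <= 2)).
Proof.
split.
  move/forall_inP => H i j i9 jn; case E: (gn S i j) => //=.
  have hin : (Ordinal i9, Ordinal jn) \in ~: S by rewrite inE -gn_ord /= E.
  by have := H _ hin; rewrite card_nb.
move=> H; apply/forall_inP => -[x y]; rewrite inE -gn_ord => hn.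
by rewrite card_nb; have := H x y (ltn_ord x) (ltn_ord y); rewrite (negbTE hn).
Qed.

Lemma indep_iff S : indep12 (@grid_adj 9 n) S <-> (forall i j, i < 9 -> j < n -> cond3 S i j).
Proof.
rewrite /indep12; split.
  case/andP => /ind_iff H1 /dom_iff H2 i j i9 jn.
  by rewrite /cond3; case/andP: (H1 i j i9 jn) => -> ->; exact: H2 i j i9 jn.
move=> H; apply/andP; split.
  by apply/ind_iff => i j i9 jn; case/and3P: (H i j i9 jn) => -> ->.
by apply/dom_iff => i j i9 jn; case/and3P: (H i j i9 jn).
Qed.
Lemma map_mkseq (A B : Type) (f : A -> B) (g : nat -> A) k : map f (mkseq g k) = mkseq (f \o g) k.
Proof. by rewrite /mkseq -map_comp. Qed.

Lemma sumn_mkseq f k : sumn (mkseq f k) = \sum_(i < k) f i.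
Proof.
elim: k => [|k IH]; first by rewrite big_ord0.
by rewrite mkseqS sumn_rcons IH big_ord_recr.
Qed.

Lemma card_total S : #|S| = cost (wS S).
Proof.
transitivity (\sum_(x : 'I_9) \sum_(y : 'I_n) ((x, y) \in S : nat)).
  by rewrite cardA pair_big; apply: eq_big => // -[x y].
rewrite exchange_big /cost /wS map_mkseq sumn_mkseq; apply: eq_bigr => j _.
rewrite /comp /pc -sumn_count /colS map_mkseq sumn_mkseq; apply: eq_bigr => i _.
by rewrite /comp gn_ord.
Qed.

Definition Sw (w : seq col) : {set 'I_9 * 'I_n} := [set u : 'I_9 * 'I_n | nth false (nth z w (nat_of_ord u.2)) (nat_of_ord u.1)].

Lemma size_Wn w j : all (fun c => c \in cols) w -> size (Wn w j) = 9.
Proof.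
move=> aw; case: (ltnP j (size w)) => h.
  by have := Wn_cols aw h; rewrite mem_cols => /andP[/eqP].
by rewrite /Wn nth_default.
Qed.

Lemma gn_Sw w i j : size w = n -> all (fun c => c \in cols) w -> gn (Sw w) i j = nth false (Wn w j) i.
Proof.
move=> sw aw; case: (ltnP i 9) => i9; last first.
  by rewrite gn_out ?i9 // nth_default // size_Wn.
case: (ltnP j n) => jn; last first.
  by rewrite gn_out ?jn ?orbT // /Wn [nth z w j]nth_default ?sw // nth_z.
by rewrite (gn_ord _ (Ordinal i9) (Ordinal jn)) inE.
Qed.

Lemma wS_Sw w : size w = n -> all (fun c => c \in cols) w -> wS (Sw w) = w.
Proof.
move=> sw aw; apply: (@eq_from_nth _ z); rewrite ?size_mkseq // => j jn.
rewrite nth_mkseq //; apply: (@eq_from_nth _ false); rewrite ?size_mkseq -/(Wn w j) ?size_Wn // => i i9.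
by rewrite nth_colS gn_Sw.
Qed.
End Link.

Theorem mainTheorem10 (n : nat) (hn : 9 <= n) :
  i12_eq (@grid_adj 9 n)
    (if (n %% 10 == 0) || (n %% 10 == 7) || (n %% 10 == 9)
     then (21 * n + 28) %/ 10
     else (21 * n + 18) %/ 10).
Proof.
change (i12_eq (@grid_adj 9 n) (fval n)).
have A := ans_all hn.
case: n hn A => [|m] hn A; first by exfalso; move: hn; rewrite ltn0.
split.
  have [w [sw vw cw]] := final_upper A.
  have aw : all (fun c => c \in cols) w by case/andP: vw.
  exists (@Sw m.+1 w); split; last by rewrite card_total wS_Sw.
  by apply/indep_iff/valid_iff; rewrite wS_Sw.
move=> S HS.
have V : validw (wS S) by apply/valid_iff/indep_iff.
have [k [ak lk]] := final_lower (size_mkseq (colS S) m.+1) V.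
by move: ak; rewrite A => -[->]; rewrite card_total.
Qed.
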